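(* Let $X,X_1,X_2,X_3,X_{12},X_{13},X_{23},X_{123}$ be eight points in the plane, forming a combinatorial cube. For $\{i,j,k\}=\{1,2,3\}$, the pair of opposite faces $XX_iX_{ij}X_j$ and $X_kX_{ik}X_{ijk}X_{jk}$ has four pairs of corresponding edges $(XX_i,\,X_kX_{ik})$, $(X_iX_{ij},\,X_{ik}X_{ijk})$, $(X_jX_{ij},\,X_{jk}X_{ijk})$, $(XX_j,\,X_kX_{jk})$, whose (lines') intersection points are four points. If, for some pair of opposite faces, these four intersection points of corresponding edges are collinear, then the same is true for every other pair of opposite faces.
   Context: Subscripts are unordered, so $X_{ij}=X_{ji}$ and $X_{ijk}=X_{123}$. The vertices of the combinatorial cube are indexed by subsets of $\{1,2,3\}$; edges join vertices whose index sets differ by one element, and faces are the quadrilaterals $XX_iX_{ij}X_j$ and $X_kX_{ik}X_{ijk}X_{jk}$. An edge is identified with the line through its two endpoints. The points are assumed to be in general position so that all the lines and intersection points involved are well defined. *)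

(* Defs.v *)
From HB Require Import structures.
From mathcomp Require Import all_boot all_order all_algebra.
Set Implicit Arguments. Unset Strict Implicit. Unset Printing Implicit Defensive.
Import Order.TTheory GRing.Theory Num.Theory.
Local Open Scope ring_scope.

Definition point (R : realFieldType) := (R * R)%type.

Definition hom (R : realFieldType) (p : point R) : R * R * R := (p.1, p.2, 1).
Definition cross (R : realFieldType) (u v : R * R * R) : R * R * R :=
  let '(u1, u2, u3) := u in let '(v1, v2, v3) := v in
  (u2 * v3 - u3 * v2, u3 * v1 - u1 * v3, u1 * v2 - u2 * v1).

Definition meet_h (R : realFieldType) (p1 p2 q1 q2 : point R) : R * R * R :=
  cross (cross (hom p1) (hom p2)) (cross (hom q1) (hom q2)).

(* the lines p1p2 and q1q2 are well defined and meet in a unique point of the plane *)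
Definition meet_ok (R : realFieldType) (p1 p2 q1 q2 : point R) : Prop :=
  (meet_h p1 p2 q1 q2).2 != 0.

Definition meet (R : realFieldType) (p1 p2 q1 q2 : point R) : point R :=
  let '(x, y, z) := meet_h p1 p2 q1 q2 in (x / z, y / z).

Definition cube (R : realFieldType) := {set 'I_3} -> point R.

(* Pairs of corresponding edges for the pair of opposite faces transversal to
   direction k: edge X_S X_{S+m} (k,m not in S, m <> k) of the face not
   containing k, and edge X_{S+k} X_{S+m+k} of the opposite face. *)
Definition corr_edge (k m : 'I_3) (S : {set 'I_3}) : bool :=
  [&& k \notin S, m \notin S & m != k].

Definition corr_meet (R : realFieldType) (X : cube R) (k m : 'I_3) (S : {set 'I_3}) :=
  meet (X S) (X (m |: S)) (X (k |: S)) (X (m |: (k |: S))).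

Definition general_position (R : realFieldType) (X : cube R) : Prop :=
  forall k m S, corr_edge k m S ->
    meet_ok (X S) (X (m |: S)) (X (k |: S)) (X (m |: (k |: S))).

Definition faces_collinear (R : realFieldType) (X : cube R) (k : 'I_3) : Prop :=
  exists a b c : R, (a != 0 \/ b != 0) /\
    forall m S, corr_edge k m S ->
      a * (corr_meet X k m S).1 + b * (corr_meet X k m S).2 + c = 0.

(* Main.v *)
Require Import Defs.
From HB Require Import structures.
From mathcomp Require Import all_boot all_order all_algebra.
From mathcomp Require Import ring lra.
Set Implicit Arguments. Unset Strict Implicit. Unset Printing Implicit Defensive.
Import Order.TTheory GRing.Theory Num.Theory.
Local Open Scope ring_scope.

Module P1.
Section Vec.
Variable R : realFieldType.
Local Notation V := (R * R * R)%type.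

Definition v0 : V := (0, 0, 0).
Definition dot (u v : V) : R := u.1.1 * v.1.1 + u.1.2 * v.1.2 + u.2 * v.2.
Definition dt (u v w : V) : R := dot u (cross v w).
Definition scl (s : R) (v : V) : V := (s * v.1.1, s * v.1.2, s * v.2).
Definition vadd (u v : V) : V := (u.1.1 + v.1.1, u.1.2 + v.1.2, u.2 + v.2).
Definition mhv (a b c d : V) : V := cross (cross a b) (cross c d).

Ltac vsimpl := rewrite /mhv /dt /dot /scl /vadd /cross /v0 /=.
Ltac vring := vsimpl; try (congr (_, _, _)); ring.

Lemma v0P (v : V) : v = v0 <-> [/\ v.1.1 = 0, v.1.2 = 0 & v.2 = 0].
Proof. by case: v => [[a b] c] /=; split => [[-> -> ->]|[-> -> ->]]. Qed.

Lemma scl_eq0 s v : v != v0 -> scl s v = v0 -> s = 0.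
Proof.
case: v => [[a b] c] /= nz /v0P [/= h1 h2 h3].
case: (eqVneq s 0) => // sn.
move: nz; rewrite /v0.
move/eqP: h1; move/eqP: h2; move/eqP: h3.
rewrite !mulf_eq0 (negbTE sn) /= => /eqP -> /eqP -> /eqP ->; by rewrite eqxx.
Qed.

Lemma dot_self_eq0 (v : V) : dot v v = 0 -> v = v0.
Proof.
case: v => [[a b] c]; rewrite /dot /= => h.
have ha : 0 <= a * a by rewrite -expr2 sqr_ge0.
have hb : 0 <= b * b by rewrite -expr2 sqr_ge0.
have hc : 0 <= c * c by rewrite -expr2 sqr_ge0.
move/eqP: h; rewrite paddr_eq0 ?addr_ge0 // => /andP [].
rewrite paddr_eq0 // => /andP [].
rewrite !mulf_eq0 !orbb => /eqP -> /eqP -> /eqP -> //.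
Qed.

Lemma cross0l v : cross v0 v = v0. Proof. by case: v => [[a b] c]; vring. Qed.
Lemma cross0r v : cross v v0 = v0. Proof. by case: v => [[a b] c]; vring. Qed.
Lemma scl0 s : scl s v0 = v0. Proof. vring. Qed.
Lemma scl0l v : scl 0 v = v0. Proof. by case: v => [[a b] c]; vring. Qed.
Lemma vadd0 v : vadd v0 v = v. Proof. by case: v => [[a b] c]; vsimpl; rewrite !add0r. Qed.
Lemma vaddv0 v : vadd v v0 = v. Proof. by case: v => [[a b] c]; vsimpl; rewrite !addr0. Qed.
Lemma crossvv v : cross v v = v0. Proof. by case: v => [[a b] c]; vring. Qed.


Lemma id_par_dot X Y L : scl (dot X L) Y = vadd (cross (cross X Y) L) (scl (dot Y L) X).
Proof. by case: X => [[? ?] ?]; case: Y => [[? ?] ?]; case: L => [[? ?] ?]; vring. Qed.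

Lemma par_dot X Y L : cross X Y = v0 -> Y != v0 -> dot Y L = 0 -> dot X L = 0.
Proof.
move=> h nz hy.
by apply: (scl_eq0 nz); rewrite id_par_dot h hy cross0l scl0l vadd0.
Qed.

Lemma id_par_trans a b c : scl (dot b b) (cross a c) =
   vadd (scl (dot a b) (cross b c)) (cross (cross b (cross a b)) c).
Proof. by case: a => [[? ?] ?]; case: b => [[? ?] ?]; case: c => [[? ?] ?]; vring. Qed.

Lemma par_trans a b c : cross a b = v0 -> cross b c = v0 -> b != v0 -> cross a c = v0.
Proof.
move=> hab hbc nz.
have hb : dot b b != 0 by apply/negP => /eqP /dot_self_eq0 e; move: nz; rewrite e eqxx.
move: (id_par_trans a b c); rewrite hab hbc cross0r cross0l scl0 vadd0.
case: (cross a c) => [[x y] z] /v0P [/= /eqP]; rewrite mulf_eq0 (negbTE hb) /= => /eqP ->.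
move=> /eqP; rewrite mulf_eq0 (negbTE hb) /= => /eqP ->.
move=> /eqP; rewrite mulf_eq0 (negbTE hb) /= => /eqP -> //.
Qed.

Lemma id_dt_perp a b c v : scl (dt a b c) v = vadd (scl (dot a v) (cross b c))
     (vadd (scl (dot b v) (cross c a)) (scl (dot c v) (cross a b))).
Proof. by case: a => [[? ?] ?]; case: b => [[? ?] ?]; case: c => [[? ?] ?];
     case: v => [[? ?] ?]; vring. Qed.

Lemma dt_perp a b c v : v != v0 -> dot a v = 0 -> dot b v = 0 -> dot c v = 0 -> dt a b c = 0.
Proof.
move=> nz ha hb hc; apply: (scl_eq0 nz).
by rewrite id_dt_perp ha hb hc !scl0l !vadd0.
Qed.

Lemma dt_cyc a b c : dt a b c = dot c (cross a b).
Proof. by case: a => [[? ?] ?]; case: b => [[? ?] ?]; case: c => [[? ?] ?]; vring. Qed.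

Lemma dot0l v : dot v0 v = 0.
Proof. by case: v => [[? ?] ?]; vring. Qed.
Lemma dot0r v : dot v v0 = 0.
Proof. by case: v => [[? ?] ?]; vring. Qed.

Lemma dt_par12 a b c : cross a b = v0 -> dt a b c = 0.
Proof. by move=> h; rewrite dt_cyc h dot0r. Qed.

Lemma cross_anti a b : cross b a = scl (-1) (cross a b).
Proof. by case: a => [[? ?] ?]; case: b => [[? ?] ?]; vring. Qed.

Lemma scl_neq0 s v : s != 0 -> v != v0 -> scl s v != v0.
Proof.
move=> hs hv; apply/negP => /eqP h; move: hv; case: v h => [[a b] c] /v0P [/= /eqP].
rewrite !mulf_eq0 (negbTE hs) /= => /eqP -> /eqP; rewrite mulf_eq0 (negbTE hs) /= => /eqP ->.
by move=> /eqP; rewrite mulf_eq0 (negbTE hs) /= => /eqP ->; rewrite eqxx.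
Qed.

Lemma id_rank1 a b c d : scl (dt a c d) (cross b a) = vadd (scl (dt a b d) (cross c a))
        (scl (- dt a b c) (cross d a)).
Proof. by case: a => [[? ?] ?]; case: b => [[? ?] ?]; case: c => [[? ?] ?];
       case: d => [[? ?] ?]; vring. Qed.
Lemma id_rank2 a b c d : scl (dt b c d) (cross a b) = vadd (scl (- dt a b d) (cross c b))
        (scl (dt a b c) (cross d b)).
Proof. by case: a => [[? ?] ?]; case: b => [[? ?] ?]; case: c => [[? ?] ?];
       case: d => [[? ?] ?]; vring. Qed.

Lemma rank_lem a b c d : cross a b != v0 -> dt a b c = 0 -> dt a b d = 0 ->
  dt a c d = 0 /\ dt b c d = 0.
Proof.
move=> nz hc hd; split.
- have nz' : cross b a != v0 by rewrite cross_anti scl_neq0 // oppr_eq0 oner_eq0.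
  apply: (scl_eq0 nz').
  by rewrite id_rank1 hc hd oppr0 !scl0l vadd0.
- apply: (scl_eq0 nz).
  by rewrite id_rank2 hc hd oppr0 !scl0l vadd0.
Qed.

End Vec.
Arguments v0 {R}.

End P1.
Import P1.

Module P3.
Section Norm.
Variable R : realFieldType.
Local Notation V := (R * R * R)%type.
Ltac vsimpl := rewrite /mhv /dt /dot /scl /vadd /cross /v0 /=.

Definition Gsh (u00 u10 u01 u11 : V) := exists X0 X1 Y0 Y1 w00 w10 w01 w11 : R,
  [/\ u00 = (w00 * X0, w00 * Y0, w00), u10 = (w10 * X1, w10 * Y0, w10),
      u01 = (w01 * X0, w01 * Y1, w01) & u11 = (w11 * X1, w11 * Y1, w11)].
Definition Dsh (d q q' : V) := exists s t l m : R,
  [/\ d = (s, t, 0), q = (0, l, 0) & q' = (m, 0, 0)].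

Definition pj (u v : V) := u.2 * v.1.1 = u.1.1 * v.2.
Definition pk (u v : V) := u.2 * v.1.2 = u.1.2 * v.2.
Definition fh (u00 u10 u01 u11 : V) :=
  pj u00 u01 /\ pj u10 u11 /\ pk u00 u10 /\ pk u01 u11 /\
      mhv u00 u01 u10 u11 != v0 /\ mhv u00 u10 u01 u11 != v0.

Lemma pj_sym (u v : V) : pj u v -> pj v u.
Proof. by rewrite /pj => h; rewrite mulrC -h mulrC. Qed.
Lemma pk_sym (u v : V) : pk u v -> pk v u.
Proof. by rewrite /pk => h; rewrite mulrC -h mulrC. Qed.

Lemma mhv_sw1 (a b c d : V) : mhv c d a b = scl (-1) (mhv a b c d).
Proof. by case: a => [[? ?] ?]; case: b => [[? ?] ?]; case: c => [[? ?] ?];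
  case: d => [[? ?] ?]; vsimpl; congr (_,_,_); ring. Qed.
Lemma mhv_sw2 (a b c d : V) : mhv b a d c = mhv a b c d.
Proof. by case: a => [[? ?] ?]; case: b => [[? ?] ?]; case: c => [[? ?] ?];
  case: d => [[? ?] ?]; vsimpl; congr (_,_,_); ring. Qed.

Lemma nz_m1 (v : V) : v != v0 -> scl (-1) v != v0.
Proof. by move=> h; apply: scl_neq0 => //; rewrite oppr_eq0 oner_eq0. Qed.

Lemma fh_swa (u00 u10 u01 u11 : V) : fh u00 u10 u01 u11 -> fh u10 u00 u11 u01.
Proof.
case=> h1 [h2 [h3 [h4 [h5 h6]]]]; do 4 (split; first by [apply: pk_sym|]).
split; first by rewrite mhv_sw1 nz_m1.
by rewrite mhv_sw2.
Qed.

Lemma fh_swb (u00 u10 u01 u11 : V) : fh u00 u10 u01 u11 -> fh u01 u11 u00 u10.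
Proof.
case=> h1 [h2 [h3 [h4 [h5 h6]]]]; do 4 (split; first by [apply: pj_sym|]).
split; first by rewrite mhv_sw2.
by rewrite mhv_sw1 nz_m1.
Qed.

Ltac ccase e := case: (eqVneq e 0) => [->|?].

Lemma class_w00 (u00 u10 u01 u11 : V) : fh u00 u10 u01 u11 -> u00.2 = 0 ->
  [\/ Dsh u00 u10 u01, Dsh u01 u11 u00 | Dsh u10 u00 u11].
Proof.
case: u00 => [[x00 y00] w00]; case: u10 => [[x10 y10] w10];
case: u01 => [[x01 y01] w01]; case: u11 => [[x11 y11] w11].
rewrite /fh /pj /pk /= => -[h1 [h2 [h3 [h4 [g1 g2]]]]] e; subst w00.
move: h1 h3; rewrite !mul0r => /esym /eqP h1 /esym /eqP h3.
move: h1 h3; rewrite !mulf_eq0.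
case/orP => /eqP hx.
-
  subst x00. case/orP => /eqP hy.
  + subst y00. by move: g1; vsimpl; rewrite !(mul0r, mulr0, subr0, oppr0) eqxx.
  + subst w10. move: h2; rewrite mul0r => /esym /eqP; rewrite mulf_eq0; case/orP => /eqP hx10.
    * subst x10; move: g2; vsimpl; rewrite !(mul0r, mulr0, subr0, oppr0) eqxx //.
    * subst w11; move: h4; rewrite mulr0 => /eqP; rewrite mulf_eq0; case/orP => /eqP hw.
      - subst w01; move: g1; vsimpl; rewrite !(mul0r, mulr0, subr0, oppr0, subrr) eqxx //.
      - subst y11; apply: Or33; by exists x10, y10, y00, x11.
-
  subst w01. move=> hy.
  move: h4; rewrite mul0r => /esym /eqP; rewrite mulf_eq0; case/orP => /eqP hy01.
  + subst y01. case/orP: hy => /eqP hy.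
    * subst y00. move: g1; vsimpl; rewrite !(mul0r, mulr0, subr0, oppr0, subrr) eqxx //.
    * subst w10. move: h2; rewrite mul0r => /esym /eqP; rewrite mulf_eq0; case/orP => /eqP hh.
      - subst x10. apply: Or31; by exists x00, y00, y10, x01.
      - subst w11. move: g1; vsimpl; rewrite !(mul0r, mulr0, subr0, oppr0, subrr) eqxx //.
  + subst w11. case/orP: hy => /eqP hy.
    * subst y00. move: h2; rewrite mulr0 => /eqP; rewrite mulf_eq0; case/orP => /eqP hh.
      - subst w10. move: g1; vsimpl; rewrite !(mul0r, mulr0, subr0, oppr0, subrr) eqxx //.
      - subst x11. apply: Or32; by exists x01, y01, y11, x00.
    * subst w10. move: g1; vsimpl; rewrite !(mul0r, mulr0, subr0, oppr0, subrr) eqxx //.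
Qed.

Lemma divhelp (w a b c : R) : w != 0 -> w * a = b * c -> a = b * (c / w).
Proof. by move=> nw h; rewrite mulrA -h mulrAC mulfV // mul1r. Qed.

Definition shape (u00 u10 u01 u11 : V) :=
  Gsh u00 u10 u01 u11 \/ Dsh u00 u10 u01 \/ Dsh u10 u00 u11 \/ Dsh u01 u11 u00
    \/ Dsh u11 u01 u10.

Lemma classify (u00 u10 u01 u11 : V) : fh u00 u10 u01 u11 -> shape u00 u10 u01 u11.
Proof.
move=> h.
case: (eqVneq u00.2 0) => [e|n00].
  by case: (class_w00 h e) => H; [(right; left)|(right; right; right; left)|(right; right; left)].
case: (eqVneq u10.2 0) => [e|n10].
  by case: (class_w00 (fh_swa h) e) => H; [(right; right; left)|(right; right; right; right)|(right; left)].
case: (eqVneq u01.2 0) => [e|n01].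
  by case: (class_w00 (fh_swb h) e) => H; [(right; right; right; left)|(right; left)|(right; right; right; right)].
case: (eqVneq u11.2 0) => [e|n11].
  by case: (class_w00 (fh_swb (fh_swa h)) e) => H; [(right; right; right; right)|(right; right; left)|(right; right; right; left)].
left.
move: h n00 n10 n01 n11.
case: u00 => [[x00 y00] w00]; case: u10 => [[x10 y10] w10];
case: u01 => [[x01 y01] w01]; case: u11 => [[x11 y11] w11].
rewrite /fh /pj /pk /= => -[h1 [h2 [h3 [h4 _]]]] n00 n10 n01 n11.
exists (x00 / w00), (x10 / w10), (y00 / w00), (y01 / w01), w00, w10, w01, w11.
split; congr (_, _, _); apply: divhelp => //; rewrite ?h1 ?h2 ?h3 ?h4; ring.
Qed.

Lemma Fnorm (u000 u100 u010 u110 u001 u101 u011 u111 : V) :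
  fh u000 u100 u010 u110 -> fh u001 u101 u011 u111 ->
  dt ((0,1,0) : V) (mhv u000 u001 u100 u101) (mhv u010 u011 u110 u111) = 0.
Proof.
move=> /classify h0 /classify h1.
case: h0 => [[X0 [X1 [Y0 [Y1 [w00 [w10 [w01 [w11 [-> -> -> ->]]]]]]]]]|[[s [t [l [m [-> -> ->]]]]]|[[s [t [l [m [-> -> ->]]]]]|[[s [t [l [m [-> -> ->]]]]]|[s [t [l [m [-> -> ->]]]]]]]]];
(case: h1 => [[X0' [X1' [Y0' [Y1' [w00' [w10' [w01' [w11' [-> -> -> ->]]]]]]]]]|[[s' [t' [l' [m' [-> -> ->]]]]]|[[s' [t' [l' [m' [-> -> ->]]]]]|[[s' [t' [l' [m' [-> -> ->]]]]]|[s' [t' [l' [m' [-> -> ->]]]]]]]]]);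
repeat match goal with | u : prod (prod _ _) _ |- _ => let a := fresh in let b := fresh in let c := fresh in case: u => [[a b] c] end;
vsimpl; ring.
Qed.

End Norm.

End P3.
Import P3.

Module P4.
Section Fp.
Variable R : realFieldType.
Local Notation V := (R * R * R)%type.
Ltac vsimpl := rewrite /mhv /dt /dot /scl /vadd /cross /v0 /=.
Ltac dall := repeat match goal with | u : prod (prod _ _) _ |- _ =>
  let a := fresh in let b := fresh in let c := fresh in case: u => [[a b] c] end.
Ltac vring := dall; vsimpl; try (congr (_, _, _)); ring.

Lemma id_cc (a b c : V) : cross (cross a b) (cross a c) = scl (dt a b c) a.
Proof. vring. Qed.
Lemma id_ccQ (v n Q : V) : cross (cross v Q) (cross n Q) = scl (dt Q v n) Q.
Proof. vring. Qed.
Lemma dt_anti (Q a b : V) : dt Q b a = - dt Q a b.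
Proof. vring. Qed.
Lemma dt_cyc1 (a b c : V) : dt a b c = dt b c a.
Proof. vring. Qed.
Lemma id_ccr (a b c : V) : cross (cross a b) c = vadd (scl (dot a c) b) (scl (- dot b c) a).
Proof. vring. Qed.
Lemma cross_anti0 (a b : V) : cross a b = v0 -> cross b a = v0.
Proof. by move=> h; rewrite cross_anti h scl0. Qed.
Lemma cross_antin0 (a b : V) : cross a b != v0 -> cross b a != v0.
Proof. by move=> h; rewrite cross_anti nz_m1. Qed.
Lemma id_dcq1 (x y Q : V) : dot (cross x y) Q = dot y (cross Q x).
Proof. vring. Qed.
Lemma id_dcq2 (x y Q : V) : dot (cross x y) Q = dot x (cross y Q).
Proof. vring. Qed.
Lemma dot_crossQ (x y Q : V) : cross x Q = v0 -> dot (cross x y) Q = 0.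
Proof. by move=> h; rewrite id_dcq1 (cross_anti0 h) dot0r. Qed.
Lemma dot_crossQ' (x y Q : V) : cross y Q = v0 -> dot (cross x y) Q = 0.
Proof. by move=> h; rewrite id_dcq2 h dot0r. Qed.

Lemma Hv (Q v n s1 s2 : V) : cross v Q != v0 -> cross n Q != v0 ->
  dt Q v n = 0 -> dt Q v s1 = 0 -> dt Q n s2 = 0 ->
  cross (cross v s1) (cross n s2) = v0.
Proof.
move=> nv nn hvn h1 h2.
have A : cross (cross v s1) (cross v Q) = v0.
  by rewrite id_cc -dt_cyc1 h1 scl0l.
have B : cross (cross v Q) (cross n Q) = v0 by rewrite id_ccQ hvn scl0l.
have C : cross (cross n Q) (cross n s2) = v0.
  by apply: cross_anti0; rewrite id_cc -dt_cyc1 h2 scl0l.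
by apply: (par_trans (par_trans A B nv) C nn).
Qed.

Lemma faceE (Q u00 u10 u01 u11 : V) : Q != v0 ->
  dt Q u00 u01 = 0 -> dt Q u10 u11 = 0 -> dt Q u00 u10 = 0 -> dt Q u01 u11 = 0 ->
  mhv u00 u01 u10 u11 != v0 -> mhv u00 u10 u01 u11 != v0 ->
  (cross u00 Q = v0 /\ cross u11 Q = v0) \/ (cross u10 Q = v0 /\ cross u01 Q = v0).
Proof.
move=> nQ h1 h2 h3 h4 gj gk.
case: (eqVneq (cross u00 Q) v0) => e00.
- left; split => //.
  have n10 : cross u10 Q != v0.
    apply/negP => /eqP e10; move: gk; rewrite /mhv.
    by rewrite (par_trans e00 (cross_anti0 e10) nQ) cross0l eqxx.
  case: (eqVneq (cross u11 Q) v0) => // n11.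
  move: gk; rewrite -mhv_sw2 /mhv (Hv n10 n11 h2) ?eqxx //.
    by rewrite dt_anti h3 oppr0.
  by rewrite dt_anti h4 oppr0.
- right; split.
  + case: (eqVneq (cross u10 Q) v0) => // n10.
    by move: gj; rewrite /mhv (Hv e00 n10 h3 h1 h2) eqxx.
  + case: (eqVneq (cross u01 Q) v0) => // n01.
    by move: gk; rewrite /mhv (Hv e00 n01 h1 h3 h4) eqxx.
Qed.

Lemma dt_v0 (a b : V) : dt a v0 b = 0.
Proof. vring. Qed.

Lemma Ecase (u000 u100 u010 u110 u001 u101 u011 u111 Q : V) : Q != v0 ->
  ((cross u000 Q = v0 /\ cross u110 Q = v0) \/ (cross u100 Q = v0 /\ cross u010 Q = v0)) ->
  ((cross u001 Q = v0 /\ cross u111 Q = v0) \/ (cross u101 Q = v0 /\ cross u011 Q = v0)) ->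
  dt Q (mhv u000 u001 u100 u101) (mhv u010 u011 u110 u111) = 0.
Proof.
move=> nQ [[a0 _]|[a0 _]] [[a1 _]|[a1 _]]; rewrite /mhv.
- by rewrite (par_trans a0 (cross_anti0 a1) nQ) cross0l dt_v0.
- apply: dt_par12; apply: cross_anti0.
  rewrite id_ccr (dot_crossQ _ a0) (dot_crossQ' _ a1) oppr0 !scl0l vadd0 //.
- apply: dt_par12; apply: cross_anti0.
  rewrite id_ccr (dot_crossQ _ a0) (dot_crossQ' _ a1) oppr0 !scl0l vadd0 //.
- by rewrite (par_trans a0 (cross_anti0 a1) nQ) cross0r dt_v0.
Qed.

Definition mapM (r1 r2 r3 x : V) : V := (dot r1 x, dot r2 x, dot r3 x).

Lemma cov_cross (r1 r2 r3 x y : V) : cross (mapM r1 r2 r3 x) (mapM r1 r2 r3 y) =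
  mapM (cross r2 r3) (cross r3 r1) (cross r1 r2) (cross x y).
Proof. rewrite /mapM; vring. Qed.
Lemma cof_cof (r1 r2 r3 x : V) :
  mapM (cross (cross r3 r1) (cross r1 r2)) (cross (cross r1 r2) (cross r2 r3))
       (cross (cross r2 r3) (cross r3 r1)) x = scl (dt r1 r2 r3) (mapM r1 r2 r3 x).
Proof. rewrite /mapM; vring. Qed.
Lemma cov_mhv (r1 r2 r3 a b c d : V) :
  mhv (mapM r1 r2 r3 a) (mapM r1 r2 r3 b) (mapM r1 r2 r3 c) (mapM r1 r2 r3 d) =
  scl (dt r1 r2 r3) (mapM r1 r2 r3 (mhv a b c d)).
Proof. by rewrite /mhv !cov_cross cof_cof. Qed.
Lemma cov_dt (r1 r2 r3 x y z : V) :
  dt (mapM r1 r2 r3 x) (mapM r1 r2 r3 y) (mapM r1 r2 r3 z) = dt r1 r2 r3 * dt x y z.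
Proof. rewrite /mapM; vring. Qed.
Lemma mapM_nz (r1 r2 r3 x : V) : dt r1 r2 r3 != 0 -> x != v0 -> mapM r1 r2 r3 x != v0.
Proof.
move=> hd hx; apply/negP => /eqP /v0P [/= h1 h2 h3].
by move: hd; rewrite (dt_perp hx h1 h2 h3) eqxx.
Qed.
Lemma dt_scl (a b c : V) s t : dt a (scl s b) (scl t c) = s * t * dt a b c.
Proof. vring. Qed.
Lemma dt_e2 (D : R) (a b : V) : dt (0, D, 0) a b = D * dt (0,1,0) a b.
Proof. vring. Qed.
Lemma dt_e2E (a b : V) : dt (0,1,0) a b = a.2 * b.1.1 - a.1.1 * b.2.
Proof. vring. Qed.
Lemma dt_e1 (D : R) (a b : V) : dt (D, 0, 0) a b = D * (a.1.2 * b.2 - a.2 * b.1.2).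
Proof. vring. Qed.

Lemma id_MQ (Q Q' : V) : mapM (cross Q (cross Q' Q)) (cross (cross Q' Q) Q') (cross Q' Q) Q
  = (0, dot (cross Q' Q) (cross Q' Q), 0).
Proof. rewrite /mapM; vring. Qed.
Lemma id_MQ' (Q Q' : V) : mapM (cross Q (cross Q' Q)) (cross (cross Q' Q) Q') (cross Q' Q) Q'
  = (dot (cross Q' Q) (cross Q' Q), 0, 0).
Proof. rewrite /mapM; vring. Qed.
Lemma id_detM (Q Q' : V) : dt (cross Q (cross Q' Q)) (cross (cross Q' Q) Q') (cross Q' Q)
  = dot (cross Q' Q) (cross Q' Q) * dot (cross Q' Q) (cross Q' Q).
Proof. vring. Qed.

Section NormQ.
Variables Q Q' : V.
Let O := cross Q' Q.
Let n1 := cross Q O.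
Let n2 := cross O Q'.
Let M := mapM n1 n2 O.

Lemma MQ : M Q = (0, dot O O, 0).
Proof. exact: id_MQ. Qed.
Lemma MQ' : M Q' = (dot O O, 0, 0).
Proof. exact: id_MQ'. Qed.
Lemma detM : dt n1 n2 O = dot O O * dot O O.
Proof. exact: id_detM. Qed.

Hypothesis nQQ : cross Q Q' != v0.
Lemma dO_nz : dot O O != 0.
Proof.
apply/negP => /eqP /dot_self_eq0 e; move: nQQ.
by rewrite cross_anti -/O e scl0 eqxx.
Qed.
Lemma detM_nz : dt n1 n2 O != 0.
Proof. by rewrite detM mulf_neq0 // dO_nz. Qed.

Lemma inc_j (a b : V) : dt Q a b = 0 -> pj (M a) (M b).
Proof.
move=> h; have := cov_dt n1 n2 O Q a b; rewrite -/M MQ h mulr0 dt_e2 => /eqP.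
rewrite mulf_eq0 (negbTE dO_nz) /= dt_e2E subr_eq0 => /eqP.
by rewrite /pj.
Qed.
Lemma inc_k (a b : V) : dt Q' a b = 0 -> pk (M a) (M b).
Proof.
move=> h; have := cov_dt n1 n2 O Q' a b; rewrite -/M MQ' h mulr0 dt_e1 => /eqP.
rewrite mulf_eq0 (negbTE dO_nz) /= subr_eq0 => /eqP.
by rewrite /pk => ->.
Qed.
Lemma gp_M (a b c d : V) : mhv a b c d != v0 -> mhv (M a) (M b) (M c) (M d) != v0.
Proof.
move=> h; rewrite /M cov_mhv; apply: scl_neq0; first exact: detM_nz.
by apply: mapM_nz => //; exact: detM_nz.
Qed.

Lemma Fnormal (u000 u100 u010 u110 u001 u101 u011 u111 : V) :
  dt Q u000 u010 = 0 -> dt Q u100 u110 = 0 -> dt Q u001 u011 = 0 -> dt Q u101 u111 = 0 ->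
  dt Q' u000 u100 = 0 -> dt Q' u010 u110 = 0 -> dt Q' u001 u101 = 0 -> dt Q' u011 u111 = 0 ->
  mhv u000 u010 u100 u110 != v0 -> mhv u001 u011 u101 u111 != v0 ->
  mhv u000 u100 u010 u110 != v0 -> mhv u001 u101 u011 u111 != v0 ->
  dt Q (mhv u000 u001 u100 u101) (mhv u010 u011 u110 u111) = 0.
Proof.
move=> j1 j2 j3 j4 k1 k2 k3 k4 g1 g2 g3 g4.
have F := @Fnorm R (M u000) (M u100) (M u010) (M u110) (M u001) (M u101) (M u011) (M u111).
have := F (conj (inc_j j1) (conj (inc_j j2) (conj (inc_k k1) (conj (inc_k k2) (conj (gp_M g1) (gp_M g3))))))
          (conj (inc_j j3) (conj (inc_j j4) (conj (inc_k k3) (conj (inc_k k4) (conj (gp_M g2) (gp_M g4)))))).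
rewrite /M !cov_mhv dt_scl -/M => /eqP; rewrite !mulf_eq0 (negbTE detM_nz) /= => /eqP h.
have := cov_dt n1 n2 O Q (mhv u000 u001 u100 u101) (mhv u010 u011 u110 u111).
rewrite -/M MQ dt_e2 h mulr0 => /esym /eqP; rewrite mulf_eq0 (negbTE detM_nz) /=.
by move/eqP.
Qed.
End NormQ.

Lemma Fprime (u000 u100 u010 u110 u001 u101 u011 u111 Q Q' : V) :
  Q != v0 -> Q' != v0 ->
  dt Q u000 u010 = 0 -> dt Q u100 u110 = 0 -> dt Q u001 u011 = 0 -> dt Q u101 u111 = 0 ->
  dt Q' u000 u100 = 0 -> dt Q' u010 u110 = 0 -> dt Q' u001 u101 = 0 -> dt Q' u011 u111 = 0 ->
  mhv u000 u010 u100 u110 != v0 -> mhv u001 u011 u101 u111 != v0 ->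
  mhv u000 u100 u010 u110 != v0 -> mhv u001 u101 u011 u111 != v0 ->
  dt Q (mhv u000 u001 u100 u101) (mhv u010 u011 u110 u111) = 0.
Proof.
move=> nQ nQ' j1 j2 j3 j4 k1 k2 k3 k4 g1 g2 g3 g4.
case: (eqVneq (cross Q Q') v0) => e; last first.
  exact: (Fnormal e j1 j2 j3 j4 k1 k2 k3 k4 g1 g2 g3 g4).
have cv : forall a b, dt Q' a b = 0 -> dt Q a b = 0.
  by move=> a b h; apply: (par_dot e nQ') h.
apply: Ecase => //.
  by apply: faceE => //; apply: cv.
by apply: faceE => //; apply: cv.
Qed.

End Fp.

End P4.
Import P4.

Module P5.
Section Main.
Variable R : realFieldType.
Local Notation V := (R * R * R)%type.
Ltac vsimpl := rewrite /mhv /dt /dot /scl /vadd /cross /v0 /hom /meet_h /=.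
Ltac dall := repeat match goal with | u : prod (prod _ _) _ |- _ =>
  let a := fresh in let b := fresh in let c := fresh in case: u => [[a b] c] end.
Ltac vring := dall; vsimpl; try (congr (_, _, _)); ring.

Implicit Types p : bool -> bool -> bool -> point R.

Definition hk_j p a := meet_h (p a false false) (p a true false) (p a false true) (p a true true).
Definition hk_kp p b := meet_h (p false b false) (p true b false) (p false b true) (p true b true).
Definition hkp_j p c := meet_h (p false false c) (p false true c) (p true false c) (p true true c).
Definition hkp_k p b := meet_h (p false b false) (p false b true) (p true b false) (p true b true).
Definition hj_kp p c := meet_h (p false false c) (p true false c) (p false true c) (p true true c).
Definition hj_k p a := meet_h (p a false false) (p a false true) (p a true false) (p a true true).

Lemma ident p (b : bool) :
  dt (hkp_j p false) (hkp_j p true) (hkp_k p b) = - dt (hk_j p false) (hk_j p true) (hk_kp p b).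
Proof.
rewrite /hkp_j /hkp_k /hk_j /hk_kp.
case: b; move: (p false false false) (p true false false) (p false true false) (p true true false)
      (p false false true) (p true false true) (p false true true) (p true true true).
all: move=> [a0 a1] [b0 b1] [c0 c1] [d0 d1] [e0 e1] [f0 f1] [g0 g1] [h0 h1].
all: vsimpl; ring.
Qed.

Definition alldets (a b c d : V) :=
  [/\ dt a b c = 0, dt a b d = 0, dt a c d = 0 & dt b c d = 0].

Definition GP12 p :=
  [/\ hk_j p false != v0, hk_j p true != v0, hk_kp p false != v0, hk_kp p true != v0 &
   [/\ hkp_j p false != v0, hkp_j p true != v0, hkp_k p false != v0, hkp_k p true != v0 &
   [/\ hj_kp p false != v0, hj_kp p true != v0, hj_k p false != v0 & hj_k p true != v0]]].

Lemma id_dcx1 (X Y : V) : dot (cross X Y) X = 0. Proof. vring. Qed.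
Lemma id_dcx2 (X Y : V) : dot (cross X Y) Y = 0. Proof. vring. Qed.

Lemma id_conc (A B X : V) : cross (cross A B) X = vadd (scl (dot A X) B) (scl (- dot B X) A).
Proof. vring. Qed.

Lemma perp2 (A B X : V) : dot A X = 0 -> dot B X = 0 -> cross (cross A B) X = v0.
Proof. by move=> h1 h2; rewrite id_conc h1 h2 oppr0 !scl0l vadd0. Qed.

Lemma dot_sym (a b : V) : dot a b = dot b a. Proof. vring. Qed.

Lemma conc4 (A B C D : V) : cross (cross A B) (cross C D) = v0 ->
  cross A B != v0 -> cross C D != v0 -> cross (cross A C) (cross B D) = v0.
Proof.
move=> h nX nY.
have hC : dot C (cross A B) = 0.
  by rewrite dot_sym; apply: (par_dot h nY); exact: id_dcx1.
have hD : dot D (cross A B) = 0.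
  by rewrite dot_sym; apply: (par_dot h nY); exact: id_dcx2.
have hA : dot A (cross A B) = 0 by rewrite dot_sym id_dcx1.
have hB : dot B (cross A B) = 0 by rewrite dot_sym id_dcx2.
have e1 := perp2 hA hC.
have e2 := perp2 hB hD.
exact: (par_trans e1 (cross_anti0 e2) nX).
Qed.

Lemma main8 p : GP12 p ->
  alldets (hk_j p false) (hk_j p true) (hk_kp p false) (hk_kp p true) ->
  alldets (hkp_j p false) (hkp_j p true) (hkp_k p false) (hkp_k p true).
Proof.
move=> [g1 g2 g3 g4 [g5 g6 g7 g8 [g9 g10 g11 g12]]] [d1 d2 d3 d4].
set J0 := hkp_j p false; set J1 := hkp_j p true.
set K0 := hkp_k p false; set K1 := hkp_k p true.
have a1 : dt J0 J1 K0 = 0 by rewrite /J0 /J1 /K0 ident d1 oppr0.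
have a2 : dt J0 J1 K1 = 0 by rewrite /J0 /J1 /K1 ident d2 oppr0.
suff a3 : dt J0 K0 K1 = 0.
  split => //.
  case: (eqVneq (cross J0 J1) v0) => e.
    by apply: (par_dot (cross_anti0 e) g5).
  by case: (rank_lem e a1 a2).
case: (eqVneq (cross J0 J1) v0) => eJ; last by case: (rank_lem eJ a1 a2).
case: (eqVneq (cross (hk_kp p false) (hk_kp p true)) v0) => eP; last first.
  have I2 : forall a, dt (hj_kp p false) (hj_kp p true) (hj_k p a) =
                      - dt (hk_kp p false) (hk_kp p true) (hk_j p a).
    by move=> a; exact: (ident (fun a b c => p b a c) a).
  have I3 : forall c, dt K0 K1 (hkp_j p c) =
                      - dt (hj_k p false) (hj_k p true) (hj_kp p c).
    by move=> c; exact: (ident (fun a b c => p a c b) c).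
  have r0 : dt (hj_kp p false) (hj_kp p true) (hj_k p false) = 0.
    by rewrite I2 -dt_cyc1 d3 oppr0.
  have r1 : dt (hj_kp p false) (hj_kp p true) (hj_k p true) = 0.
    by rewrite I2 -dt_cyc1 d4 oppr0.
  have nR : cross (hj_kp p false) (hj_kp p true) != v0.
    apply/negP => /eqP e; move/eqP: eP; apply.
    rewrite /hj_kp /hk_kp /meet_h in e g9 g10 *.
    exact: (conc4 e g9 g10).
  case: (rank_lem nR r0 r1) => s0 _.
  by rewrite dt_cyc1 /J0 I3 -dt_cyc1 s0 oppr0.
have cvJ : forall L, dot (hkp_j p true) L = 0 -> dot J0 L = 0.
  by move=> L; apply: (par_dot eJ g6).
have cvP : forall L, dot (hk_kp p true) L = 0 -> dot (hk_kp p false) L = 0.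
  by move=> L; apply: (par_dot eP g4).
have := (@Fprime R (Defs.hom (p false false false)) (Defs.hom (p true false false))
  (Defs.hom (p false true false)) (Defs.hom (p true true false)) (Defs.hom (p false false true))
  (Defs.hom (p true false true)) (Defs.hom (p false true true)) (Defs.hom (p true true true)) J0 (hk_kp p false)).
apply => //.
- by rewrite /dt /J0 /hkp_j /meet_h id_dcx1.
- by rewrite /dt /J0 /hkp_j /meet_h id_dcx2.
- by rewrite /dt; apply: cvJ; rewrite /hkp_j /meet_h id_dcx1.
- by rewrite /dt; apply: cvJ; rewrite /hkp_j /meet_h id_dcx2.
- by rewrite /dt /hk_kp /meet_h id_dcx1.
- by rewrite /dt; apply: cvP; rewrite /hk_kp /meet_h id_dcx1.
- by rewrite /dt /hk_kp /meet_h id_dcx2.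
- by rewrite /dt; apply: cvP; rewrite /hk_kp /meet_h id_dcx2.
Qed.

End Main.

End P5.
Import P5.

Module P6.
Section Col.
Variable R : realFieldType.
Local Notation V := (R * R * R)%type.
Ltac vsimpl := rewrite /mhv /dt /dot /scl /vadd /cross /v0 /Defs.hom /meet_h /=.
Ltac dall := repeat match goal with | u : prod (prod _ _) _ |- _ =>
  let a := fresh in let b := fresh in let c := fresh in case: u => [[a b] c] end.
Ltac vring := dall; vsimpl; try (congr (_, _, _)); ring.

Definition nrm (h : V) : point R := (h.1.1 / h.2, h.1.2 / h.2).
Lemma meetE (p q r s : point R) : meet p q r s = nrm (meet_h p q r s).
Proof. by rewrite /meet; case: (meet_h _ _ _ _) => [[x y] z]. Qed.

Definition collin4 (q1 q2 q3 q4 : point R) := exists a b c : R, (a != 0 \/ b != 0) /\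
  [/\ a * q1.1 + b * q1.2 + c = 0, a * q2.1 + b * q2.2 + c = 0,
      a * q3.1 + b * q3.2 + c = 0 & a * q4.1 + b * q4.2 + c = 0].

Lemma lin_dot (h : V) a b c : h.2 != 0 -> a * (nrm h).1 + b * (nrm h).2 + c = 0 ->
  dot h (a, b, c) = 0.
Proof.
case: h => [[x y] z] /= nz e; rewrite /dot /=.
have -> : x * a + y * b + z * c = z * (a * (x / z) + b * (y / z) + c) by field.
by rewrite e mulr0.
Qed.

Lemma collin_dets (h1 h2 h3 h4 : V) : h1.2 != 0 -> h2.2 != 0 -> h3.2 != 0 -> h4.2 != 0 ->
  collin4 (nrm h1) (nrm h2) (nrm h3) (nrm h4) -> alldets h1 h2 h3 h4.
Proof.
move=> n1 n2 n3 n4 [a [b [c [nab [e1 e2 e3 e4]]]]].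
have nl : (a, b, c) != v0.
  apply/negP => /eqP [ea eb _]; by case: nab; rewrite ?ea ?eb eqxx.
have l1 := lin_dot n1 e1; have l2 := lin_dot n2 e2.
have l3 := lin_dot n3 e3; have l4 := lin_dot n4 e4.
by split; apply: (dt_perp nl).
Qed.

Lemma id_line (q q' r : point R) :
  (q.2 - q'.2) * r.1 + (q'.1 - q.1) * r.2 + (q.1 * q'.2 - q'.1 * q.2) =
  dt (Defs.hom q) (Defs.hom q') (Defs.hom r).
Proof. case: q => ? ?; case: q' => ? ?; case: r => ? ?; vsimpl; ring. Qed.

Lemma dt_hh1 (q q' : point R) : dt (Defs.hom q) (Defs.hom q') (Defs.hom q) = 0.
Proof. case: q => ? ?; case: q' => ? ?; vsimpl; ring. Qed.
Lemma dt_hh2 (q q' : point R) : dt (Defs.hom q) (Defs.hom q') (Defs.hom q') = 0.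
Proof. case: q => ? ?; case: q' => ? ?; vsimpl; ring. Qed.

Lemma line_nz (q q' : point R) : q != q' -> (q.2 - q'.2 != 0) \/ (q'.1 - q.1 != 0).
Proof.
case: q => x y; case: q' => x' y' /= ne.
case: (eqVneq (y - y') 0) => [e|]; last by left.
right; apply: contra ne; rewrite subr_eq0 => /eqP ->.
by move/eqP: e; rewrite subr_eq0 => /eqP ->.
Qed.

Lemma collin_of_dets (q1 q2 q3 q4 : point R) :
  alldets (Defs.hom q1) (Defs.hom q2) (Defs.hom q3) (Defs.hom q4) -> collin4 q1 q2 q3 q4.
Proof.
move=> [d1 d2 d3 d4].
case: (eqVneq q1 q2) => [e12|n12]; last first.
  exists (q1.2 - q2.2), (q2.1 - q1.1), (q1.1 * q2.2 - q2.1 * q1.2); split.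
    exact: line_nz.
  by rewrite !id_line dt_hh1 dt_hh2 d1 d2.
subst q2.
case: (eqVneq q1 q3) => [e13|n13]; last first.
  exists (q1.2 - q3.2), (q3.1 - q1.1), (q1.1 * q3.2 - q3.1 * q1.2); split.
    exact: line_nz.
  by rewrite !id_line dt_hh1 dt_hh2 d3.
subst q3.
case: (eqVneq q1 q4) => [e14|n14]; last first.
  exists (q1.2 - q4.2), (q4.1 - q1.1), (q1.1 * q4.2 - q4.1 * q1.2); split.
    exact: line_nz.
  by rewrite !id_line dt_hh1 dt_hh2.
subst q4.
exists 1, 0, (- q1.1); split; first by left; rewrite oner_eq0.
by split; ring.
Qed.

Lemma hom_nrm (h : V) : h.2 != 0 -> h = scl h.2 (Defs.hom (nrm h)).
Proof.
case: h => [[x y] z] /= nz; rewrite /scl /Defs.hom /nrm /=.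
by congr (_, _, _); [rewrite mulrC divfK|rewrite mulrC divfK|rewrite mulr1].
Qed.

Lemma dt_scl3 (a b c : V) r s t : dt (scl r a) (scl s b) (scl t c) = r * s * t * dt a b c.
Proof. vring. Qed.

Lemma dets_collin (h1 h2 h3 h4 : V) : h1.2 != 0 -> h2.2 != 0 -> h3.2 != 0 -> h4.2 != 0 ->
  alldets h1 h2 h3 h4 -> collin4 (nrm h1) (nrm h2) (nrm h3) (nrm h4).
Proof.
move=> n1 n2 n3 n4 [d1 d2 d3 d4]; apply: collin_of_dets.
have e1 := hom_nrm n1; have e2 := hom_nrm n2; have e3 := hom_nrm n3; have e4 := hom_nrm n4.
have z : forall r s t (x : R), r != 0 -> s != 0 -> t != 0 -> r * s * t * x = 0 -> x = 0.
  move=> r s t x hr hs ht /eqP; rewrite !mulf_eq0 (negbTE hr) (negbTE hs) (negbTE ht) /=.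
  by move/eqP.
split.
- apply: (z _ _ _ _ n1 n2 n3); rewrite -dt_scl3 -e1 -e2 -e3 //.
- apply: (z _ _ _ _ n1 n2 n4); rewrite -dt_scl3 -e1 -e2 -e4 //.
- apply: (z _ _ _ _ n1 n3 n4); rewrite -dt_scl3 -e1 -e3 -e4 //.
- apply: (z _ _ _ _ n2 n3 n4); rewrite -dt_scl3 -e2 -e3 -e4 //.
Qed.

End Col.

End P6.
Import P6.

Module P7.
Lemma third (k k' : 'I_3) : k != k' -> exists j : 'I_3,
  [/\ j != k, j != k' & forall i : 'I_3, [|| i == k, i == k' | i == j]].
Proof.
case: k => [[|[|[|//]]] hk]; case: k' => [[|[|[|//]]] hk'] //= _.
- by exists (Ordinal (isT : (2 < 3)%N)); split => //; case => [[|[|[|//]]] ?].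
- by exists (Ordinal (isT : (1 < 3)%N)); split => //; case => [[|[|[|//]]] ?].
- by exists (Ordinal (isT : (2 < 3)%N)); split => //; case => [[|[|[|//]]] ?].
- by exists (Ordinal (isT : (0 < 3)%N)); split => //; case => [[|[|[|//]]] ?].
- by exists (Ordinal (isT : (1 < 3)%N)); split => //; case => [[|[|[|//]]] ?].
- by exists (Ordinal (isT : (0 < 3)%N)); split => //; case => [[|[|[|//]]] ?].
Qed.

Section Idx.
Variable R : realFieldType.
Variable X : cube R.
Variables k k' j : 'I_3.
Hypothesis hjk : j != k.
Hypothesis hjk' : j != k'.
Hypothesis hkk' : k != k'.
Hypothesis cover : forall i : 'I_3, [|| i == k, i == k' | i == j].

Definition sb (a b c : bool) : {set 'I_3} :=
  [set i | ((i == k') && a) || ((i == j) && b) || ((i == k) && c)].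
Definition pp (a b c : bool) : point R := X (sb a b c).

Lemma hkj : (k == j) = false. Proof. by rewrite eq_sym (negbTE hjk). Qed.
Lemma hk'j : (k' == j) = false. Proof. by rewrite eq_sym (negbTE hjk'). Qed.
Lemma hk'k : (k' == k) = false. Proof. by rewrite eq_sym (negbTE hkk'). Qed.
Let E := (hkj, hk'j, hk'k, negbTE hjk, negbTE hjk', negbTE hkk', eqxx).

Lemma sb_eq (S : {set 'I_3}) a b c :
  (forall i, i \in S = ((i == k') && a) || ((i == j) && b) || ((i == k) && c)) -> S = sb a b c.
Proof. by move=> h; apply/setP => i; rewrite h /sb inE. Qed.

Lemma sbj a b c : j |: sb a b c = sb a true c.
Proof.
apply: sb_eq => i; rewrite in_setU1 /sb inE.
by case/or3P: (cover i) => /eqP ->; rewrite ?E /= ?orbT ?orbF.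
Qed.
Lemma sbk' a b c : k' |: sb a b c = sb true b c.
Proof.
apply: sb_eq => i; rewrite in_setU1 /sb inE.
by case/or3P: (cover i) => /eqP ->; rewrite ?E /= ?orbT ?orbF.
Qed.
Lemma sbk a b c : k |: sb a b c = sb a b true.
Proof.
apply: sb_eq => i; rewrite in_setU1 /sb inE.
by case/or3P: (cover i) => /eqP ->; rewrite ?E /= ?orbT ?orbF.
Qed.
Lemma sb0 : set0 = sb false false false.
Proof. by apply: sb_eq => i; rewrite in_set0 !andbF. Qed.
Lemma sb1j : [set j] = sb false true false.
Proof. by apply: sb_eq => i; rewrite in_set1 ?andbF ?andbT /= ?orbF. Qed.
Lemma sb1k : [set k] = sb false false true.
Proof. by apply: sb_eq => i; rewrite in_set1 ?andbF ?andbT /= ?orbF. Qed.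
Lemma sb1k' : [set k'] = sb true false false.
Proof. by apply: sb_eq => i; rewrite in_set1 ?andbF ?andbT /= ?orbF. Qed.

Lemma S_cases (a b o : 'I_3) (S : {set 'I_3}) :
  (forall i, [|| i == a, i == b | i == o]) -> a != o -> b != o ->
  a \notin S -> b \notin S -> S = set0 \/ S = [set o].
Proof.
move=> cov hao hbo ha hb.
case: (boolP (o \in S)) => ho; [right|left]; apply/setP => i; rewrite ?inE;
  case/or3P: (cov i) => /eqP ->; rewrite ?(negbTE ha) ?(negbTE hb) ?eqxx //.
- by rewrite (negbTE hao).
- by rewrite (negbTE hbo).
- by rewrite (negbTE ho).
Qed.

Lemma nz2 (h : R * R * R) : h.2 != 0 -> h != v0.
Proof. by apply: contra => /eqP ->. Qed.

Local Notation p := pp.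

Lemma cm_kj a : corr_meet X k j (sb a false false) = nrm (hk_j p a).
Proof. by rewrite /corr_meet sbk !sbj meetE. Qed.
Lemma cm_kk' b : corr_meet X k k' (sb false b false) = nrm (hk_kp p b).
Proof. by rewrite /corr_meet sbk !sbk' meetE. Qed.
Lemma cm_k'j c : corr_meet X k' j (sb false false c) = nrm (hkp_j p c).
Proof. by rewrite /corr_meet sbk' !sbj meetE. Qed.
Lemma cm_k'k b : corr_meet X k' k (sb false b false) = nrm (hkp_k p b).
Proof. by rewrite /corr_meet sbk' !sbk meetE. Qed.

Ltac ce := rewrite /corr_edge /sb !inE ?E /= ?andbF ?orbF ?E //.

Hypothesis gp : general_position X.

Lemma ok_kj a : (hk_j p a).2 != 0.
Proof. have := gp (k := k) (m := j) (S := sb a false false); rewrite /meet_ok sbk !sbj; apply; ce. Qed.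
Lemma ok_kk' b : (hk_kp p b).2 != 0.
Proof. have := gp (k := k) (m := k') (S := sb false b false); rewrite /meet_ok sbk !sbk'; apply; ce. Qed.
Lemma ok_k'j c : (hkp_j p c).2 != 0.
Proof. have := gp (k := k') (m := j) (S := sb false false c); rewrite /meet_ok sbk' !sbj; apply; ce. Qed.
Lemma ok_k'k b : (hkp_k p b).2 != 0.
Proof. have := gp (k := k') (m := k) (S := sb false b false); rewrite /meet_ok sbk' !sbk; apply; ce. Qed.
Lemma ok_jk' c : (hj_kp p c).2 != 0.
Proof. have := gp (k := j) (m := k') (S := sb false false c); rewrite /meet_ok sbj !sbk'; apply; ce. Qed.
Lemma ok_jk a : (hj_k p a).2 != 0.
Proof. have := gp (k := j) (m := k) (S := sb a false false); rewrite /meet_ok sbj !sbk; apply; ce. Qed.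

Lemma GPp : GP12 p.
Proof.
by split; [apply: nz2; apply: ok_kj|apply: nz2; apply: ok_kj|apply: nz2; apply: ok_kk'
  |apply: nz2; apply: ok_kk'|split; [apply: nz2; apply: ok_k'j|apply: nz2; apply: ok_k'j
  |apply: nz2; apply: ok_k'k|apply: nz2; apply: ok_k'k|split; apply: nz2;
   [apply: ok_jk'|apply: ok_jk'|apply: ok_jk|apply: ok_jk]]].
Qed.

Lemma transfer : faces_collinear X k -> faces_collinear X k'.
Proof.
move=> [a [b [c [nab H]]]].
have C : collin4 (nrm (hk_j p false)) (nrm (hk_j p true)) (nrm (hk_kp p false)) (nrm (hk_kp p true)).
  exists a, b, c; split => //; split.
  - rewrite -cm_kj; apply: H; ce.
  - rewrite -cm_kj; apply: H; ce.
  - rewrite -cm_kk'; apply: H; ce.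
  - rewrite -cm_kk'; apply: H; ce.
have D := collin_dets (ok_kj false) (ok_kj true) (ok_kk' false) (ok_kk' true) C.
have D' := main8 GPp D.
have [a' [b' [c' [nab' [e1 e2 e3 e4]]]]] :=
  dets_collin (ok_k'j false) (ok_k'j true) (ok_k'k false) (ok_k'k true) D'.
exists a', b', c'; split => // m S /and3P [hk'S hmS hmk'].
case/or3P: (cover m) => /eqP em; subst m.
- have cov' : forall i : 'I_3, [|| i == k', i == k | i == j].
    by move=> i; case/or3P: (cover i) => ->; rewrite ?orbT.
  case: (S_cases cov' (negbT hk'j) (negbT hkj) hk'S hmS) => ->.
  + by rewrite sb0 cm_k'k.
  + by rewrite sb1j cm_k'k.
- by move: hmk'; rewrite eqxx.
- have cov' : forall i : 'I_3, [|| i == k', i == j | i == k].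
    by move=> i; case/or3P: (cover i) => ->; rewrite ?orbT.
  case: (S_cases cov' (negbT hk'k) hjk hk'S hmS) => ->.
  + by rewrite sb0 cm_k'j.
  + by rewrite sb1k cm_k'j.
Qed.

End Idx.


End P7.
Import P7.

Theorem theorem3 (R : realFieldType) (X : cube R) :
  general_position X ->
  forall k k' : 'I_3, faces_collinear X k -> faces_collinear X k'.
Proof.
move=> gp k k' h.
case: (eqVneq k k') => [<-|nk] //.
have [j [h1 h2 h3]] := third nk.
exact: (transfer h1 h2 nk h3 gp h).
Qed.
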